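(* Let $\mathcal{F}$ be the class of planar graphs of maximum degree at most $4$, and let $G \in \mathcal{F}$ be a graph with $\chi_2(G) > 12$ that minimizes the pair $(|V(G)|, |E(G)|)$ (lexicographically) among all graphs of $\mathcal{F}$ with $\chi_2 > 12$, with a fixed planar embedding. Then $G$ does not contain a $3$-vertex incident to two $4$-faces.
   Context: All graphs are finite, without loops or parallel edges. A distance-$2$ coloring of a graph is an assignment of colors to its vertices such that any two distinct vertices at distance at most $2$ receive different colors; $\chi_2(G)$ is the minimum number of colors in a distance-$2$ coloring of $G$. A $d$-vertex is a vertex of degree $d$. The degree of a face is the number of edges incident to it, counted with multiplicity; a $d$-face is a face of degree $d$. A vertex is incident to a face if it lies on its boundary. *)

(* Defs.v *)
(* Simple graphs are symmetric irreflexive relations on a finType. *)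
From mathcomp Require Import all_boot all_fingroup.
Set Implicit Arguments. Unset Strict Implicit. Unset Printing Implicit Defensive.

Section Graphs.
Variables (T : finType) (e : rel T).

Definition simple_graph : Prop := symmetric e /\ irreflexive e.

Definition deg (v : T) : nat := #|[set w | e v w]|.

(* darts (= oriented edges); their number is twice the number of edges *)
Definition dart (d : T * T) : bool := e d.1 d.2.
Definition nedges : nat := #|[set d | dart d]|./2.

(* distance at most 2 (for distinct vertices) *)
Definition dist_le2 (u v : T) : bool := e u v || [exists w, e u w && e w v].

Definition d2colorable (k : nat) : bool :=
  [exists c : {ffun T -> 'I_k},
     [forall u, forall v, ((u != v) && dist_le2 u v) ==> (c u != c v)]].

Lemma d2colorable_ex : exists k, d2colorable k.
Proof.
exists #|T|; apply/existsP; exists [ffun x => enum_rank x].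
apply/forallP => u; apply/forallP => v; apply/implyP => /andP[uv _].
by rewrite !ffunE; apply: contra uv => /eqP/enum_rank_inj ->.
Qed.

Definition chi2 : nat := ex_minn d2colorable_ex.

Definition ncomp : nat := #|[set [set w | connect e v w] | v : T]|.
Definition niso : nat := #|[set v | [forall w, ~~ e v w]]|.

(* Combinatorial embedding (rotation system): rho is a permutation of the
   darts (fixing non-darts) which, at every vertex v, cyclically permutes
   the darts with tail v in a single cycle. *)
Definition rotation_system (rho : {perm T * T}) : Prop :=
  [/\ forall d, ~~ dart d -> rho d = d,
      forall d, dart d -> (rho d).1 = d.1
    & forall d d', dart d -> dart d' -> d.1 = d'.1 -> fconnect rho d d'].

Definition face_step (rho : {perm T * T}) (d : T * T) : T * T :=
  if dart d then rho (d.2, d.1) else d.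

(* faces = orbits of face_step on darts, represented as sets of darts;
   the degree of a face f is #|f| (edges counted with multiplicity) *)
Definition faces (rho : {perm T * T}) : {set {set T * T}} :=
  [set [set d' | fconnect (face_step rho) d d'] | d in [set d | dart d]].

Definition incident (v : T) (f : {set T * T}) : bool := [exists d in f, d.1 == v].

(* planar (genus 0) embedding: Euler's formula V - E + F = 2 for every
   component with an edge, i.e. V + F + (#isolated) = 2 #components + E *)
Definition plane_embedding (rho : {perm T * T}) : Prop :=
  rotation_system rho /\
  #|T| + #|faces rho| + niso = 2 * ncomp + nedges.

Definition planar : Prop := exists rho, plane_embedding rho.

Definition in_F : Prop := simple_graph /\ planar /\ forall v, deg v <= 4.

End Graphs.

Definition lexle (p q : nat * nat) : Prop :=
  (p.1 < q.1)%N \/ (p.1 = q.1 /\ (p.2 <= q.2)%N).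

(* Main.v *)
Require Import Defs.
From mathcomp Require Import all_boot all_fingroup zify.
Set Implicit Arguments. Unset Strict Implicit. Unset Printing Implicit Defensive.

Section Gen.
Variable X : finType.

Lemma iter_closed (f : X -> X) (S : pred X) x n :
  (forall z, S z -> S (f z)) -> S x -> S (iter n f x).
Proof. by move=> H Sx; elim: n => //= n IH; apply: H. Qed.

Lemma fconnect_closed (f : X -> X) (S : pred X) x y :
  (forall z, S z -> S (f z)) -> S x -> fconnect f x y -> S y.
Proof. by move=> H Sx /iter_findex <-; apply: iter_closed. Qed.

Lemma fconnect_agree (f g : X -> X) (S : pred X) x :
  (forall z, S z -> S (f z)) -> (forall z, S z -> f z = g z) -> S x ->
  fconnect f x =1 fconnect g x.
Proof.
move=> H E Sx.
have E2 n : iter n f x = iter n g x /\ S (iter n f x).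
  elim: n => [|n [IH1 IH2]] //=; rewrite -IH1; split; [exact: E | exact: H].
move=> y; apply/idP/idP => /iter_findex <-.
  by rewrite (proj1 (E2 _)); apply: fconnect_iter.
by rewrite -(proj1 (E2 _)); apply: fconnect_iter.
Qed.

Lemma rem_fconnect (s : {perm X}) p z x y : s p = z -> x != z -> y != z ->
  fconnect s x y -> fconnect (tperm p z * s)%g x y.
Proof.
case: (eqVneq p z) => [-> _|pz spz]; first by rewrite tperm1 mul1g.
move=> xz yz /iter_findex; move: (findex _ _ _) => n.
elim: n {-2}n (leqnn n) x xz => [|N IH] n ln x xz ex.
  by move: ln; rewrite leqn0 => /eqP n0; subst n; rewrite -ex connect0.
case: n ln ex => [|m] ln ex; first by rewrite -ex connect0.
rewrite iterSr in ex.
case: (eqVneq x p) => [xp|xnp].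
  subst x; rewrite spz in ex.
  case: m ln ex => [|k] ln ex; first by rewrite -ex eqxx in yz.
  rewrite iterSr in ex.
  have szz : s z != z.
    apply: contraNneq pz => szz; apply/eqP; apply: (@perm_inj _ s); by rewrite szz spz.
  have kN : k <= N by lia.
  apply: connect_trans (IH k kN (s z) szz ex).
  apply: connect1; rewrite /= permM tpermL eqxx //.
have sxz : s x != z.
  apply: contraNneq xnp => sxz; apply/eqP; apply: (@perm_inj _ s); by rewrite sxz spz.
apply: connect_trans (IH m ln (s x) sxz ex).
apply: connect1; rewrite /= permM tpermD ?eqxx // eq_sym //.
Qed.

End Gen.
Section Col.
Variables (T : finType) (e : rel T).

Lemma chi2_le k : d2colorable e k -> chi2 e <= k.
Proof. by rewrite /chi2; case: ex_minnP => m _ H; apply: H. Qed.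

Lemma chi2_col : d2colorable e (chi2 e).
Proof. by rewrite /chi2; case: ex_minnP. Qed.

Lemma d2col_mono k k' : k <= k' -> d2colorable e k -> d2colorable e k'.
Proof.
move=> kk /existsP[c /forallP H]; apply/existsP.
exists [ffun x => widen_ord kk (c x)]; apply/forallP => u; apply/forallP => w.
apply/implyP => uw; rewrite !ffunE; have := implyP (forallP (H u) w) uw.
apply: contra => /eqP E; apply/eqP; apply: val_inj; exact: (congr1 val E).
Qed.

Lemma dist_sym : symmetric e -> forall u w, dist_le2 e u w = dist_le2 e w u.
Proof.
move=> sym u w; rewrite /dist_le2 sym; congr (_ || _).
apply/existsP/existsP => [[m /andP[a b]]|[m /andP[a b]]]; exists m;
  by rewrite sym b sym a.
Qed.

Lemma cardU_le (A B : {set T}) : #|A :|: B| <= #|A| + #|B|.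
Proof. by rewrite cardsU leq_subr. Qed.

End Col.

Lemma arith11 (a b c d f g h i j k l : nat) :
  f <= g + c -> g <= h + b -> h <= i + a -> i = 3 -> j = a.+2 -> j <= 4 ->
  k = b.+1 -> l = c.+1 -> k <= 4 -> l <= 4 -> d <= f -> d <= 11.
Proof. lia. Qed.

Lemma arith12 (n a b : nat) : n <= 11 -> a <= n -> a + b = 12 -> 0 < b.
Proof. lia. Qed.
Section Graph.
Variables (T : finType) (e : rel T) (rho : {perm T * T}).
Hypotheses (sym : symmetric e) (rot : rotation_system e rho).

Notation fs := (face_step e rho).

Lemma rho_nd d : ~~ dart e d -> rho d = d.
Proof. by case: rot => H _ _; apply: H. Qed.

Lemma rho_tail d : dart e d -> (rho d).1 = d.1.
Proof. by case: rot => _ H _; apply: H. Qed.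

Lemma rho_dart d : dart e d -> dart e (rho d).
Proof.
move=> dd; apply/negP => /negP nd; have := rho_nd nd.
by move/perm_inj => E; rewrite E dd in nd.
Qed.

Lemma dart_rev d : dart e d -> dart e (d.2, d.1).
Proof. by rewrite /dart /= sym. Qed.

Lemma fs_dart d : dart e d -> dart e (fs d).
Proof. by move=> dd; rewrite /face_step dd; apply/rho_dart/dart_rev. Qed.

Lemma fs_darteq d : dart e d -> fs d = rho (d.2, d.1).
Proof. by move=> dd; rewrite /face_step dd. Qed.

Lemma fs_inj : injective fs.
Proof.
move=> [a b] [c d]; rewrite /face_step.
case: (boolP (dart e (a,b))) => d1; case: (boolP (dart e (c,d))) => d2 //.
- by move/perm_inj => [-> ->].
- move=> E; have := rho_dart (dart_rev d1); by rewrite E (negbTE d2).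
- move=> E; have := rho_dart (dart_rev d2); by rewrite -E (negbTE d1).
Qed.

Lemma orbit_dart d y : dart e d -> fconnect fs d y -> dart e y.
Proof. by move=> dd; apply: (fconnect_closed (S := dart e)) => // z; apply: fs_dart. Qed.

Lemma rho_conn v p w : dart e (v,p) -> e v w -> fconnect rho (v,p) (v,w).
Proof. by case: rot => _ _ H dp evw; apply: H. Qed.

Lemma two_cycle v p q : dart e (v,p) -> rho (v,p) = (v,q) -> rho (v,q) = (v,p) ->
  forall w, e v w -> (w == p) || (w == q).
Proof.
move=> dp r1 r2 w evw.
have H n : iter n rho (v,p) \in [:: (v,p); (v,q)].
  elim: n => [|n IH] /=; first by rewrite mem_head.
  by move: IH; rewrite !inE => /orP[] /eqP ->; rewrite ?r1 ?r2 eqxx ?orbT.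
have := H (findex rho (v,p) (v,w)); rewrite iter_findex; last exact: rho_conn.
by rewrite !inE !xpair_eqE eqxx.
Qed.

Lemma deg3_two v p q : deg e v = 3 -> dart e (v,p) -> rho (v,p) = (v,q) ->
  rho (v,q) = (v,p) -> False.
Proof.
move=> d3 dp r1 r2.
have : #|[set w | e v w]| <= #|[set p; q]|.
  apply: subset_leq_card; apply/subsetP => w; rewrite !inE => evw.
  exact: two_cycle evw.
by rewrite -/(deg e v) d3 cards2; case: (p != q).
Qed.

Lemma deg3_four v a b c d : deg e v = 3 -> e v a -> e v b -> e v c -> e v d ->
  uniq [:: a; b; c; d] -> False.
Proof.
move=> d3 ea eb ec ed /card_uniqP U.
have : #|[:: a; b; c; d]| <= #|[set w | e v w]|.
  apply: subset_leq_card; apply/subsetP => w; rewrite !inE.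
  by case/or4P => /eqP ->.
by rewrite U -/(deg e v) d3.
Qed.

End Graph.
Section Face4.
Variables (T : finType) (e : rel T) (rho : {perm T * T}).
Hypotheses (sym : symmetric e) (rot : rotation_system e rho).
Notation fs := (face_step e rho).

Lemma face4 v F : deg e v = 3 -> F \in faces e rho -> #|F| = 4 -> incident v F ->
  exists p s x, [/\ F = [set y | fconnect fs (v,p) y], e v p, e p x, e x s & e s v] /\
   [/\ rho (v,s) = (v,p), rho (p,v) = (p,x), rho (x,p) = (x,s), rho (s,x) = (s,v) & x != v].
Proof.
move=> d3 /imsetP[d0]; rewrite inE => dd0 -> F4 /existsP[d /andP[Hd /eqP dv]].
rewrite inE in Hd.
have FE : [set y | fconnect fs d0 y] = [set y | fconnect fs d y].
  by apply/setP => y; rewrite !inE (same_connect (fconnect_sym (fs_inj sym rot)) Hd).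
have dd : dart e d by apply: orbit_dart Hd.
have O4 : fingraph.order fs d = 4.
  by rewrite /fingraph.order -F4 FE; apply: eq_card => y; rewrite !inE.
have I4 := iter_order (fs_inj sym rot) d; rewrite O4 in I4.
case: d dv dd FE I4 {Hd O4} => a p /= -> dp FE I4.
have dp' : dart e (p,v) := dart_rev sym dp.
case E1 : (rho (p,v)) => [p' x].
have tp : p' = p by have := rho_tail rot dp'; rewrite E1.
subst p'.
have d1 : dart e (p,x) by rewrite -E1; apply: rho_dart.
have d1' := dart_rev sym d1.
case E2 : (rho (x,p)) => [x' s].
have tx : x' = x by have := rho_tail rot d1'; rewrite E2.
subst x'.
have d2 : dart e (x,s) by rewrite -E2; apply: rho_dart.
have d2' := dart_rev sym d2.
case E3 : (rho (s,x)) => [s' t].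
have ts : s' = s by have := rho_tail rot d2'; rewrite E3.
subst s'.
have d3' : dart e (s,t) by rewrite -E3; apply: rho_dart.
have d3'' := dart_rev sym d3'.
move: I4; rewrite /= (fs_darteq rho dp) /= E1 (fs_darteq rho d1) /= E2.
rewrite (fs_darteq rho d2) /= E3 (fs_darteq rho d3') /= => E4.
have tt : t = v by have := rho_tail rot d3''; rewrite E4.
subst t.
exists p, s, x; split.
  split => //.
split => //.
apply/negP => /eqP xv; subst x.
have r1 : rho (v,p) = (v,s) by [].
by apply: (deg3_two rot d3 dp r1 E4).
Qed.

End Face4.
Section Core.
Variables (T : finType) (e : rel T) (rho : {perm T * T}).
Hypotheses (sym : symmetric e) (irr : irreflexive e) (rot : rotation_system e rho).
Variables (v s P Q X Y : T).
Hypotheses (d3 : deg e v = 3) (evP : e v P) (ePX : e P X) (eXs : e X s) (esv : e s v)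
  (evQ : e v Q) (eQY : e Q Y) (eYP : e Y P).
Hypotheses (r1 : rho (v,s) = (v,P)) (r2 : rho (P,v) = (P,X)) (r3 : rho (X,P) = (X,s))
  (r4 : rho (s,X) = (s,v)) (r5 : rho (v,P) = (v,Q)) (r6 : rho (Q,v) = (Q,Y))
  (r7 : rho (Y,Q) = (Y,P)) (r8 : rho (P,Y) = (P,v)) (Xv : X != v) (Yv : Y != v).

Lemma neq_e a b : e a b -> a != b.
Proof. by apply: contraTneq => ->; rewrite irr. Qed.

Let evs : e v s. Proof. by rewrite sym. Qed.

Let sP : s != P.
Proof.
apply/negP => /eqP sP; subst s.
exact: (deg3_two rot d3 (evP : dart e (v,P)) r1 r1).
Qed.

Let QP : Q != P.
Proof.
apply/negP => /eqP QP; subst Q.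
exact: (deg3_two rot d3 (evP : dart e (v,P)) r5 r5).
Qed.

Let sQ : s != Q.
Proof.
apply/negP => /eqP sQ; subst s.
exact: (deg3_two rot d3 (evP : dart e (v,P)) r5 r1).
Qed.

Let vs : v != s := neq_e evs.
Let vP : v != P := neq_e evP.
Let vQ : v != Q := neq_e evQ.
Let PX : P != X := neq_e ePX.
Let Xs : X != s := neq_e eXs.
Let QY : Q != Y := neq_e eQY.
Let YP : Y != P := neq_e eYP.

Lemma eqF (E : eqType) (a b : E) : a != b -> ((a == b) = false) * ((b == a) = false).
Proof. by move=> h; rewrite (negbTE h) eq_sym (negbTE h). Qed.

Local Notation neqs := (eqF vs, eqF vP, eqF vQ, eqF Xv, eqF Yv, eqF sP, eqF sQ, eqF QP, eqF PX, eqF Xs, eqF QY, eqF YP).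

Ltac pneq := rewrite ?xpair_eqE /= ?neqs ?andbF ?andFb ?eqxx //.

Lemma nbr_v w : e v w -> [|| w == s, w == P | w == Q].
Proof.
move=> evw; apply/negPn/negP => H.
apply: (deg3_four d3 evw evs evP evQ).
move: H; rewrite /= !inE !negb_or => /and3P[-> -> ->] /=.
by rewrite sP sQ eq_sym QP.
Qed.

Definition e' : rel T := [rel a b | e a b && ((a,b) != (v,P)) && ((a,b) != (P,v))].

Lemma e'sym : symmetric e'.
Proof.
move=> a b; rewrite /e' /= sym !xpair_eqE.
by case: (a == v); case: (a == P); case: (b == v); case: (b == P); rewrite ?andbF ?andbT.
Qed.

Lemma e'irr : irreflexive e'.
Proof. by move=> a; rewrite /e' /= irr. Qed.

Lemma e'sub a b : e' a b -> e a b.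
Proof. by case/andP => /andP[]. Qed.

Lemma dart'E d : dart e' d = [&& dart e d, d != (v,P) & d != (P,v)].
Proof. by case: d => a b; rewrite /dart /e' /= andbA. Qed.

Definition rho1 : {perm T * T} := (tperm (v,s) (v,P) * rho)%g.
Definition rho2 : {perm T * T} := (tperm (P,Y) (P,v) * rho1)%g.

Lemma rho2E d : rho2 d = rho (tperm (v,s) (v,P) (tperm (P,Y) (P,v) d)).
Proof. by rewrite /rho2 /rho1 !permM. Qed.

Lemma rho2_other d : d != (v,s) -> d != (v,P) -> d != (P,Y) -> d != (P,v) -> rho2 d = rho d.
Proof. by move=> h1 h2 h3 h4; rewrite rho2E !tpermD // eq_sym. Qed.

Lemma rho2_vs : rho2 (v,s) = (v,Q).
Proof. rewrite rho2E (tpermD (x:=(P,Y))) ?tpermL //; pneq. Qed.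

Lemma rho2_vP : rho2 (v,P) = (v,P).
Proof. rewrite rho2E (tpermD (x:=(P,Y))) ?tpermR //; pneq. Qed.

Lemma rho2_PY : rho2 (P,Y) = (P,X).
Proof. rewrite rho2E tpermL (tpermD (x:=(v,s))) //; pneq. Qed.

Lemma rho2_Pv : rho2 (P,v) = (P,v).
Proof. rewrite rho2E tpermR (tpermD (x:=(v,s))) //; pneq. Qed.

Let ePY : e P Y. Proof. by rewrite sym. Qed.
Let ePv : e P v. Proof. by rewrite sym. Qed.

Lemma rot2 : rotation_system e' rho2.
Proof.
split.
- move=> d; rewrite dart'E.
  case: (eqVneq d (v,P)) => [-> _|h2]; first exact: rho2_vP.
  case: (eqVneq d (P,v)) => [-> _|h4]; first exact: rho2_Pv.
  rewrite andbT => nd.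
  have h1 : d != (v,s) by apply: contraNneq nd => ->.
  have h3 : d != (P,Y) by apply: contraNneq nd => ->.
  by rewrite rho2_other // (rho_nd rot nd).
- move=> d; rewrite dart'E => /and3P[dd h2 h4].
  case: (eqVneq d (v,s)) => [->|h1]; first by rewrite rho2_vs.
  case: (eqVneq d (P,Y)) => [->|h3]; first by rewrite rho2_PY.
  by rewrite rho2_other // (rho_tail rot dd).
- move=> d d'; rewrite !dart'E => /and3P[dd h2 h4] /and3P[dd' h2' h4'] t.
  have c0 : fconnect rho d d' by case: rot => _ _ H; apply: H.
  have c1 : fconnect rho1 d d' by apply: rem_fconnect.
  apply: rem_fconnect => //.
  by rewrite /rho1 permM (tpermD (x:=(v,s))) //; pneq.
Qed.

Lemma darts' : [set d | dart e' d] = [set d | dart e d] :\ (v,P) :\ (P,v).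
Proof. apply/setP => d; rewrite !inE dart'E; by case: (dart e d); case: (d == (v,P)); case: (d == (P,v)). Qed.

Lemma nedges' : nedges e = (nedges e').+1.
Proof.
rewrite /nedges darts'.
rewrite [in LHS](cardsD1 (v,P)) [in LHS](cardsD1 (P,v)) !inE.
have -> : (P,v) != (v,P) by pneq.
by rewrite /dart /= evP ePv.
Qed.

Lemma e'E a b : e' a b = [&& e a b, (a,b) != (v,P) & (a,b) != (P,v)].
Proof. by rewrite /e' /= andbA. Qed.

Let e'vs : e' v s. Proof. rewrite e'E evs /=; pneq. Qed.
Let e'sv : e' s v. Proof. by rewrite e'sym. Qed.
Let e'sX : e' s X. Proof. rewrite e'E sym eXs /=; pneq. Qed.
Let e'Xs : e' X s. Proof. by rewrite e'sym. Qed.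
Let e'XP : e' X P. Proof. rewrite e'E sym ePX /=; pneq. Qed.
Let e'PX : e' P X. Proof. by rewrite e'sym. Qed.

Lemma niso' : niso e' = niso e.
Proof.
rewrite /niso; apply: eq_card => w; rewrite !inE.
apply/forallP/forallP => H u.
- apply/negP => ewu.
  case: (eqVneq w v) => [wv|wv].
    by subst w; have := H s; rewrite e'vs.
  case: (eqVneq w P) => [wP|wP].
    by subst w; have := H X; rewrite e'PX.
  have := H u; rewrite e'E ewu /= !xpair_eqE.
  by rewrite (negbTE wv) (negbTE wP).
- by apply: contra (H u); apply: e'sub.
Qed.

Lemma conn' : connect e' =2 connect e.
Proof.
move=> a b; apply/idP/idP; apply: connect_sub => x y.
  by move/e'sub; apply: connect1.
move=> exy.
case: (eqVneq (x,y) (v,P)) => [[-> ->]|h1].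
  apply: connect_trans (connect1 e'vs) _.
  apply: connect_trans (connect1 e'sX) _.
  exact: connect1 e'XP.
case: (eqVneq (x,y) (P,v)) => [[-> ->]|h2].
  apply: connect_trans (connect1 e'PX) _.
  apply: connect_trans (connect1 e'Xs) _.
  exact: connect1 e'sv.
by apply: connect1; rewrite e'E exy h1 h2.
Qed.

Lemma ncomp' : ncomp e' = ncomp e.
Proof.
have E : (fun u => [set w | connect e' u w]) =1 (fun u => [set w | connect e u w]).
  by move=> u; apply/setP => w; rewrite !inE conn'.
by rewrite /ncomp (eq_imset _ E).
Qed.

Local Notation fs := (face_step e rho).
Local Notation fs' := (face_step e' rho2).

Definition alist := [:: (v,P); (P,X); (X,s); (s,v)].
Definition blist := [:: (v,Q); (Q,Y); (Y,P); (P,v)].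
Definition mlist := [:: (s,v); (v,Q); (Q,Y); (Y,P); (P,X); (X,s)].

Let eXP : e X P. Proof. by rewrite sym. Qed.
Let esX : e s X. Proof. by rewrite sym. Qed.
Let eQv : e Q v. Proof. by rewrite sym. Qed.
Let eYQ : e Y Q. Proof. by rewrite sym. Qed.

Lemma cycA : fcycle fs alist.
Proof.
rewrite /= !(fs_darteq rho) //= ?r1 ?r2 ?r3 ?r4 ?eqxx //.
Qed.

Lemma cycB : fcycle fs blist.
Proof.
rewrite /= !(fs_darteq rho) //= ?r5 ?r6 ?r7 ?r8 ?eqxx //.
Qed.

Lemma cycM : fcycle fs' mlist.
Proof.
have D : forall a b, e a b -> (a,b) != (v,P) -> (a,b) != (P,v) -> dart e' (a,b).
  by move=> a b h1 h2 h3; rewrite dart'E /dart /= h1 h2 h3.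
rewrite /= !(fs_darteq rho2) /=; last first.
all: try (apply: D => //; pneq).
rewrite rho2_vs rho2_PY.
rewrite (rho2_other (d := (Q,v))); try pneq.
rewrite (rho2_other (d := (Y,Q))); try pneq.
rewrite (rho2_other (d := (X,P))); try pneq.
rewrite (rho2_other (d := (s,X))); try pneq.
by rewrite r6 r7 r3 r4 !eqxx.
Qed.

Let fsinj := fs_inj sym rot.

Definition A := [set y | fconnect fs (v,P) y].
Definition B := [set y | fconnect fs (v,Q) y].
Definition M := [set y | fconnect fs' (s,v) y].

Lemma orbA d : d \in alist -> [set y | fconnect fs d y] = A.
Proof.
move=> dA; apply/setP => y; rewrite !inE (fconnect_cycle cycA dA).
by rewrite (fconnect_cycle cycA (mem_head _ _)).
Qed.

Lemma orbB d : d \in blist -> [set y | fconnect fs d y] = B.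
Proof.
move=> dB; apply/setP => y; rewrite !inE (fconnect_cycle cycB dB).
by rewrite (fconnect_cycle cycB (mem_head _ _)).
Qed.

Lemma orbM d : d \in mlist -> [set y | fconnect fs' d y] = M.
Proof.
move=> dM; apply/setP => y; rewrite !inE (fconnect_cycle cycM dM).
by rewrite (fconnect_cycle cycM (mem_head _ _)).
Qed.

Lemma memA y : (y \in A) = (y \in alist).
Proof. by rewrite inE (fconnect_cycle cycA (mem_head _ _)). Qed.

Lemma memB y : (y \in B) = (y \in blist).
Proof. by rewrite inE (fconnect_cycle cycB (mem_head _ _)). Qed.

Lemma conn_notin (l : seq (T * T)) d z : fcycle fs l -> d \notin l -> fconnect fs d z -> z \notin l.
Proof.
move=> cyc dl dz; apply: contra dl => zl.
by rewrite -(fconnect_cycle cyc zl) fconnect_sym.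
Qed.

Lemma L1 d : dart e d -> d \notin alist -> d \notin blist ->
  [set y | fconnect fs' d y] = [set y | fconnect fs d y].
Proof.
move=> dd nA nB; apply/setP => y; rewrite !inE; symmetry.
apply: (fconnect_agree (S := fconnect fs d)); last exact: connect0.
  by move=> z dz; apply: connect_trans dz (fconnect1 _ _).
move=> z dz.
have zd := orbit_dart sym rot dd dz.
have zA := conn_notin cycA nA dz.
have zB := conn_notin cycB nB dz.
case: z zd zA zB {dz} => a b zd zA zB.
have h1 : (a,b) != (v,P) by apply: contraNneq zA => ->; rewrite !inE eqxx.
have h2 : (a,b) != (P,v) by apply: contraNneq zB => ->; rewrite !inE eqxx ?orbT.
rewrite /face_step dart'E zd h1 h2 /=.
rewrite rho2_other //.
- by apply: contraNneq zA => [[-> ->]]; rewrite !inE eqxx ?orbT.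
- by apply: contraNneq zB => [[-> ->]]; rewrite !inE eqxx ?orbT.
- by apply: contraNneq zB => [[-> ->]]; rewrite !inE eqxx ?orbT.
- by apply: contraNneq zA => [[-> ->]]; rewrite !inE eqxx ?orbT.
Qed.

Lemma dartA d : d \in alist -> dart e d.
Proof. by rewrite !inE => /or4P[] /eqP ->; rewrite /dart. Qed.

Lemma dartB d : d \in blist -> dart e d.
Proof. by rewrite !inE => /or4P[] /eqP ->; rewrite /dart. Qed.

Lemma AB_M d : d \in alist -> d != (v,P) -> d \in mlist.
Proof. by rewrite !inE => /or4P[] /eqP -> //; rewrite ?eqxx ?orbT. Qed.

Lemma BB_M d : d \in blist -> d != (P,v) -> d \in mlist.
Proof. by rewrite !inE => /or4P[] /eqP -> //; rewrite ?eqxx ?orbT. Qed.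

Lemma faces'E : faces e' rho2 = M |: ((faces e rho :\ A) :\ B).
Proof.
apply/setP => F; rewrite in_setU1 !in_setD1.
apply/idP/idP.
- case/imsetP => d; rewrite inE => dd' ->.
  move: (dd'); rewrite dart'E => /and3P[dd h1 h2].
  case: (boolP (d \in alist)) => dA.
    by rewrite (orbM (AB_M dA h1)) eqxx.
  case: (boolP (d \in blist)) => dB.
    by rewrite (orbM (BB_M dB h2)) eqxx.
  rewrite L1 //; apply/orP; right; apply/and3P; split.
  - apply/negP => /eqP/setP/(_ d); rewrite memB (negbTE dB) inE connect0 //.
  - apply/negP => /eqP/setP/(_ d); rewrite memA (negbTE dA) inE connect0 //.
  - by apply: imset_f; rewrite inE.
- case/orP => [/eqP -> | /and3P[FB FA /imsetP[d]]].
    apply/imsetP; exists (s,v) => //; rewrite inE dart'E /dart /= esv; pneq.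
  rewrite inE => dd FE; subst F.
  case: (boolP (d \in alist)) => dA; first by rewrite (orbA dA) eqxx in FA.
  case: (boolP (d \in blist)) => dB; first by rewrite (orbB dB) eqxx in FB.
  apply/imsetP; exists d; last by rewrite L1.
  rewrite inE dart'E dd /=; apply/andP; split.
    by apply: contraNneq dA => ->; rewrite mem_head.
  by apply: contraNneq dB => ->; rewrite !inE eqxx ?orbT.
Qed.

Lemma card_faces' : #|faces e rho| = (#|faces e' rho2|).+1.
Proof.
rewrite faces'E cardsU1.
have MA : M \notin (faces e rho :\ A) :\ B.
  rewrite !in_setD1; apply/negP => /and3P[_ MA /imsetP[d _ ME]].
  have : (s,v) \in M by rewrite inE connect0.
  rewrite ME inE => ds.
  have : [set y | fconnect fs d y] = A.
    rewrite -(orbA (d := (s,v))); last by rewrite !inE eqxx ?orbT.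
    by apply/setP => y; rewrite !inE (same_connect (fconnect_sym fsinj) ds).
  by move=> E; rewrite ME E eqxx in MA.
rewrite MA.
have Af : A \in faces e rho by apply: imset_f; rewrite inE /dart.
have Bf : B \in faces e rho :\ A.
  rewrite in_setD1; apply/andP; split; last by apply: imset_f; rewrite inE /dart.
  apply/negP => /eqP/setP/(_ (P,v)); rewrite memA memB !inE eqxx ?orbT /=.
  by pneq.
by rewrite (cardsD1 A) Af (cardsD1 B (faces e rho :\ A)) Bf.
Qed.

Lemma plane2 : plane_embedding e rho -> plane_embedding e' rho2.
Proof.
case=> _ Eu; split; first exact: rot2.
rewrite niso' ncomp'; rewrite card_faces' nedges' in Eu.
by move: Eu; rewrite addnS addSn addnS => -[].
Qed.

Lemma deg'_le w : deg e' w <= deg e w.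
Proof. by apply: subset_leq_card; apply/subsetP => u; rewrite !inE; apply: e'sub. Qed.

Lemma inF2 : in_F e -> plane_embedding e rho -> in_F e'.
Proof.
case=> _ [_ D] pe; split; first by split; [exact: e'sym | exact: e'irr].
split; first by exists rho2; exact: plane2.
by move=> w; apply: leq_trans (deg'_le w) (D w).
Qed.

Let e'PY : e' P Y. Proof. rewrite e'E ePY /=; pneq. Qed.
Let e'YP : e' Y P. Proof. by rewrite e'sym. Qed.
Let e'YQ : e' Y Q. Proof. rewrite e'E eYQ /=; pneq. Qed.
Let e'QY : e' Q Y. Proof. by rewrite e'sym. Qed.

Lemma dist' u w : u != v -> w != v -> u != w -> dist_le2 e u w -> dist_le2 e' u w.
Proof.
move=> uv wv uw /orP[euw|/existsP[m /andP[eum emw]]].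
  by apply/orP; left; rewrite e'E euw /= !xpair_eqE (negbTE uv) (negbTE wv) !andbF.
apply/orP; right.
case: (eqVneq m v) => [mv|mv]; last first.
  apply/existsP; exists m; rewrite !e'E eum emw /= !xpair_eqE.
  by rewrite (negbTE uv) (negbTE wv) (negbTE mv) !andbF.
subst m.
have evu : e v u by rewrite sym.
have Hu := nbr_v evu.
have Hw := nbr_v emw.
case: (eqVneq u P) => [uP|uP].
  subst u; case/or3P: Hw => /eqP wE; subst w.
  - by apply/existsP; exists X; rewrite e'PX e'Xs.
  - by rewrite eqxx in uw.
  - by apply/existsP; exists Y; rewrite e'PY e'YQ.
case: (eqVneq w P) => [wP|wP].
  subst w; case/or3P: Hu => /eqP uE; subst u.
  - by apply/existsP; exists X; rewrite e'sX e'XP.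
  - by rewrite eqxx in uw.
  - by apply/existsP; exists Y; rewrite e'QY e'YP.
apply/existsP; exists v; rewrite !e'E eum emw /= !xpair_eqE.
by rewrite (negbTE uv) (negbTE wv) (negbTE uP) (negbTE wP) !andbF.
Qed.

Lemma Sbound (D : forall w, deg e w <= 4) : #|[set w | (w != v) && dist_le2 e v w]| <= 11.
Proof.
pose N u := [set w | e u w].
have sub : [set w | (w != v) && dist_le2 e v w] \subset
    N v :|: (N s :\ v :\ X) :|: (N P :\ v) :|: (N Q :\ v).
  apply/subsetP => w; rewrite inE => /andP[wv /orP[evw|/existsP[m /andP[evm emw]]]].
    by rewrite !inE evw.
  case/or3P: (nbr_v evm) => /eqP mE; subst m.
  - case: (eqVneq w X) => [->|wX].
      by rewrite !inE ePX Xv !orbT.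
    by rewrite !inE emw wX wv !orbT.
  - by rewrite !inE emw wv !orbT.
  - by rewrite !inE emw wv !orbT.
have := subset_leq_card sub.
have h1 := cardU_le (N v :|: (N s :\ v :\ X) :|: (N P :\ v)) (N Q :\ v).
have h2 := cardU_le (N v :|: (N s :\ v :\ X)) (N P :\ v).
have h3 := cardU_le (N v) (N s :\ v :\ X).
have hv : #|N v| = 3 by [].
have hs : #|N s| = (#|N s :\ v :\ X|).+2.
  rewrite (cardsD1 v) (cardsD1 X (N s :\ v)) !inE esv sym eXs Xv /=.
  by rewrite add1n.
have hs4 : #|N s| <= 4 := D s.
have hP : #|N P| = (#|N P :\ v|).+1 by rewrite (cardsD1 v) !inE ePv.
have hQ : #|N Q| = (#|N Q :\ v|).+1 by rewrite (cardsD1 v) !inE eQv.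
have hP4 : #|N P| <= 4 := D P.
have hQ4 : #|N Q| <= 4 := D Q.
move: h1 h2 h3 hv hs hs4 hP hQ hP4 hQ4.
move: #|_ :|: N Q :\ v| #|_ :|: N P :\ v| #|N v :|: _| #|N v| #|N s| #|N P| #|N Q|.
move: #|N s :\ v :\ X| #|N P :\ v| #|N Q :\ v| #|[set w | _]|.
exact: arith11.
Qed.

Lemma core_false : in_F e -> plane_embedding e rho -> 12 < chi2 e ->
  (forall (T' : finType) (e2 : rel T'), in_F e2 -> 12 < chi2 e2 ->
     lexle (#|T|, nedges e) (#|T'|, nedges e2)) -> False.
Proof.
move=> iF pe c12 Hmin.
have iF' := inF2 iF pe.
have D : forall w, deg e w <= 4 by case: iF => _ [].
have c' : chi2 e' <= 12.
  rewrite leqNgt; apply/negP => H.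
  case: (Hmin _ _ iF' H) => /=; first by rewrite ltnn.
  by case=> _; rewrite nedges' ltnn.
have /existsP[c /forallP Hc] := d2col_mono c' (chi2_col e').
set S := [set w | (w != v) && dist_le2 e v w].
have Sb : #|S| <= 11 := Sbound D.
have : 0 < #|~: (c @: S)|.
  have := cardsC (c @: S); rewrite card_ord.
  have := leq_imset_card c S.
  move: #|c @: S| #|~: _| Sb => a b.
  by move=> h1 h2 h3; apply: arith12 h1 h2 h3.
case/card_gt0P => k; rewrite inE => kS.
have : d2colorable e 12.
  apply/existsP; exists [ffun w => if w == v then k else c w].
  apply/forallP => u; apply/forallP => w; apply/implyP => /andP[uw d]; rewrite !ffunE.
  case: (eqVneq u v) => [uv|uv].
    subst u; have wv : (w == v) = false by rewrite eq_sym (negbTE uw).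
    rewrite ?eqxx ?wv.
    have cS : c w \in c @: S by apply: imset_f; rewrite inE eq_sym uw d.
    by apply/eqP => E; rewrite E cS in kS.
  case: (eqVneq w v) => [wv|wv].
    subst w; rewrite ?eqxx ?(negbTE uv).
    have cS : c u \in c @: S by apply: imset_f; rewrite inE uv (dist_sym sym).
    by apply/eqP => E; rewrite -E cS in kS.
  rewrite ?(negbTE uv) ?(negbTE wv).
  have := Hc u; move/forallP/(_ w)/implyP; apply.
  by rewrite uw dist'.
by move/chi2_le; rewrite leqNgt c12.
Qed.

End Core.
Theorem lemma9 (T : finType) (e : rel T) :
  in_F e -> 12 < chi2 e ->
  (forall (T' : finType) (e' : rel T'), in_F e' -> 12 < chi2 e' ->
     lexle (#|T|, nedges e) (#|T'|, nedges e')) ->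
  forall rho : {perm T * T}, plane_embedding e rho ->
  ~ exists v : T, deg e v = 3 /\
      exists f1 f2, f1 \in faces e rho /\ f2 \in faces e rho /\ f1 != f2 /\
                     #|f1| = 4 /\ #|f2| = 4 /\ incident v f1 /\ incident v f2.
Proof.
move=> iF c12 Hmin rho pe [v [d3 [f1 [f2 [F1 [F2 [f12 [c1 [c2 [i1 i2]]]]]]]]]].
have [[sym irr] _] := iF.
have rot := pe.1.
case: (face4 sym rot d3 F1 c1 i1) => p1 [s1 [x1 [[E1 a1 b1 c1' d1'] [q1 q2 q3 q4 xv1]]]].
case: (face4 sym rot d3 F2 c2 i2) => p2 [s2 [x2 [[E2 a2 b2 c2' d2'] [t1 t2 t3 t4 xv2]]]].
have p12 : p1 != p2 by apply: contraNneq f12 => p; rewrite E1 E2 p.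
have s1p1 : s1 != p1.
  by apply/negP => /eqP E; subst s1; apply: (deg3_two rot d3 (a1 : dart e (v,p1)) q1 q1).
have s2p2 : s2 != p2.
  by apply/negP => /eqP E; subst s2; apply: (deg3_two rot d3 (a2 : dart e (v,p2)) t1 t1).
have s12 : s1 != s2.
  apply: contraNneq p12 => E; subst s2.
  by move: t1; rewrite q1 => -[->].
have evs1 : e v s1 by rewrite sym.
have evs2 : e v s2 by rewrite sym.
case: (eqVneq s2 p1) => [E|n21].
  subst s2.
  apply: (core_false sym irr rot d3 a1 b1 c1' d1' a2 b2 c2' q1 q2 q3 q4 t1 t2 t3 t4 xv1 xv2 iF pe c12 Hmin).
case: (eqVneq s1 p2) => [E|n12].
  subst s1.
  apply: (core_false sym irr rot d3 a2 b2 c2' d2' a1 b1 c1' t1 t2 t3 t4 q1 q2 q3 q4 xv2 xv1 iF pe c12 Hmin).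
apply: (deg3_four d3 a1 a2 evs1 evs2).
rewrite /= !inE !negb_or p12 eq_sym s1p1 eq_sym n21 eq_sym n12 eq_sym s2p2 s12.
done.
Qed.
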